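(* For $t\in(0,1)$ and $n\ge1$, $$(t-\alpha_n)(r_{n+1}-r_n)=\beta_{n+1}R_{n+1}-\beta_nR_{n-1},$$ $$(1-\alpha_n)(y_n-y_{n+1})=\beta_nx_{n-1}-\beta_{n+1}x_{n+1},$$ $$-\alpha_n(y_{n+1}-y_n+r_n-r_{n+1}-1)=\beta_{n+1}x_{n+1}-\beta_nx_{n-1}+\beta_nR_{n-1}-\beta_{n+1}R_{n+1}.$$
   Context: Fix $\alpha>0$, $\beta>0$, and real $A,B$ with $A\ge0$, $A+B\ge0$, not both zero; $\theta$ is the Heaviside step function. For $t\in(0,1)$ let $w(x;t)=x^\alpha(1-x)^\beta(A+B\theta(x-t))$ on $[0,1]$, and let $P_n(x)=P_n(x;t)=x^n+\mathsf p_1(n,t)x^{n-1}+\cdots$ be the monic orthogonal polynomials: $\int_0^1P_iP_jw\,dx=h_i(t)\delta_{ij}$, $h_i>0$, satisfying $xP_n=P_{n+1}+\alpha_nP_n+\beta_nP_{n-1}$, $P_{-1}=0$, $\beta_n=h_n/h_{n-1}$, $\mathsf p_1(0,t)=0$. Define $R_n(t)=B\,t^\alpha(1-t)^\beta P_n(t;t)^2/h_n$, $r_n(t)=B\,t^\alpha(1-t)^\beta P_n(t;t)P_{n-1}(t;t)/h_{n-1}$ ($r_0=0$), $x_n(t)=\frac{\beta}{h_n}\int_0^1\frac{P_n(y)^2}{1-y}\,y^\alpha(1-y)^\beta(A+B\theta(y-t))\,dy$, $y_n(t)=\frac{\beta}{h_{n-1}}\int_0^1\frac{P_n(y)P_{n-1}(y)}{1-y}\,y^\alpha(1-y)^\beta(A+B\theta(y-t))\,dy$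 ($y_0=0$). *)

(* Defs.v *)
From Stdlib Require Import Reals.
Open Scope R_scope.

(* x^a for real a, with the convention 0 for x <= 0 (only x in [0,1] matters). *)
Definition rpow (x a : R) : R := if Rlt_dec 0 x then Rpower x a else 0.

(* Heaviside step function, theta(0) = 1 (value on a null set is irrelevant). *)
Definition theta (z : R) : R := if Rle_dec 0 z then 1 else 0.

Definition weight (alpha beta A B t x : R) : R :=
  rpow x alpha * rpow (1 - x) beta * (A + B * theta (x - t)).

Definition Pe (c : nat -> nat -> R) (n : nat) (x : R) : R :=
  sum_f_R0 (fun k => c n k * x ^ k) n.

(* P_{n-1} with the convention P_{-1} = 0. *)
Definition Pprev (c : nat -> nat -> R) (n : nat) (x : R) : R :=
  match n with O => 0 | S m => Pe c m x end.

(* For integrands that are Riemann integrable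
   on [0,1] this coincides with the Riemann integral. *)
Definition improper_int01 (f : R -> R) (v : R) : Prop :=
  exists pr : (forall b : R, 0 <= b < 1 -> Riemann_integrable f 0 b),
    forall eps : R, 0 < eps ->
      exists d : R, 0 < d /\
        forall (b : R) (Hb : 0 <= b < 1), 1 - d < b ->
          Rabs (RiemannInt (pr b Hb) - v) < eps.

Definition Rn (c : nat -> nat -> R) (h : nat -> R) (alpha beta B t : R) (n : nat) : R :=
  B * rpow t alpha * rpow (1 - t) beta * (Pe c n t) ^ 2 / h n.

Definition rn (c : nat -> nat -> R) (h : nat -> R) (alpha beta B t : R) (n : nat) : R :=
  match n with
  | O => 0
  | S m => B * rpow t alpha * rpow (1 - t) beta * Pe c n t * Pe c m t / h m
  end.

(* x_n = beta/h_n * X_n, where X_n = int_0^1 P_n(y)^2/(1-y) w(y) dy *)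
Definition xn (beta : R) (h X : nat -> R) (n : nat) : R := beta / h n * X n.

(* y_n = beta/h_{n-1} * Y_n, where Y_n = int_0^1 P_n P_{n-1}/(1-y) w(y) dy; y_0 = 0 *)
Definition yn (beta : R) (h Y : nat -> R) (n : nat) : R :=
  match n with O => 0 | S m => beta / h m * Y n end.

(* Main.v *)
Require Import Defs.
From Stdlib Require Import Reals Lra Lia.
Open Scope R_scope.

Lemma imp_lin (f g : R -> R) (v w l : R) :
  improper_int01 f v -> improper_int01 g w ->
  improper_int01 (fun x => f x + l * g x) (v + l * w).
Proof.
  intros [prf Hf] [prg Hg].
  exists (fun b Hb => RiemannInt_P10 l (prf b Hb) (prg b Hb)).
  intros eps Heps.
  destruct (Hf (eps/2)) as [d1 [Hd1 H1]]; [lra|].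
  assert (Hl : 0 < Rabs l + 1) by (pose proof (Rabs_pos l); lra).
  destruct (Hg (eps/(2*(Rabs l + 1)))) as [d2 [Hd2 H2]].
  { apply Rdiv_lt_0_compat; lra. }
  exists (Rmin d1 d2); split; [apply Rmin_pos; assumption|].
  intros b Hb Hbd.
  rewrite (RiemannInt_P13 (prf b Hb) (prg b Hb)).
  assert (E1 := H1 b Hb ltac:(pose proof (Rmin_l d1 d2); lra)).
  assert (E2 := H2 b Hb ltac:(pose proof (Rmin_r d1 d2); lra)).
  replace (RiemannInt (prf b Hb) + l * RiemannInt (prg b Hb) - (v + l * w))
    with ((RiemannInt (prf b Hb) - v) + l * (RiemannInt (prg b Hb) - w)) by ring.
  eapply Rle_lt_trans; [apply Rabs_triang|].
  rewrite Rabs_mult.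
  assert (Rabs l * Rabs (RiemannInt (prg b Hb) - w) <= Rabs l * (eps / (2 * (Rabs l + 1)))).
  { apply Rmult_le_compat_l; [apply Rabs_pos|lra]. }
  assert (Rabs l * (eps / (2 * (Rabs l + 1))) < eps/2).
  { unfold Rdiv. rewrite Rinv_mult.
    replace (Rabs l * (eps * (/ 2 * / (Rabs l + 1)))) with ((eps/2) * (Rabs l / (Rabs l + 1))) by (unfold Rdiv; ring).
    assert (Rabs l / (Rabs l + 1) < 1).
    { apply (Rmult_lt_reg_r (Rabs l + 1)); [lra|]. unfold Rdiv. rewrite Rmult_assoc, Rinv_l; lra. }
    assert (0 <= Rabs l / (Rabs l + 1)).
    { apply Rmult_le_pos; [apply Rabs_pos| left; apply Rinv_0_lt_compat; lra]. }
    nra. }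
  lra.
Qed.

Lemma imp_ext (f g : R -> R) (v : R) :
  (forall x, 0 <= x < 1 -> f x = g x) ->
  improper_int01 f v -> improper_int01 g v.
Proof.
  intros Hfg [prf Hf].
  assert (prg : forall b, 0 <= b < 1 -> Riemann_integrable g 0 b).
  { intros b Hb. refine (@Riemann_integrable_ext f g 0 b _ (prf b Hb)).
    intros x Hx. rewrite Rmin_left in Hx by lra. rewrite Rmax_right in Hx by lra.
    apply Hfg; lra. }
  exists prg. intros eps Heps. destruct (Hf eps Heps) as [d [Hd H]].
  exists d; split; [exact Hd|]. intros b Hb Hbd.
  rewrite <- (RiemannInt_P18 (prf b Hb) (prg b Hb)); [apply H; exact Hbd|lra|].
  intros x Hx; apply Hfg; lra.
Qed.

Lemma imp_uniq (f : R -> R) (v w : R) :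
  improper_int01 f v -> improper_int01 f w -> v = w.
Proof.
  intros [prf Hf] [prg Hg].
  destruct (Req_dec v w) as [|Hne]; [assumption|exfalso].
  assert (He : 0 < Rabs (v - w) / 2) by (apply Rdiv_lt_0_compat; [apply Rabs_pos_lt; lra|lra]).
  destruct (Hf _ He) as [d1 [Hd1 H1]]. destruct (Hg _ He) as [d2 [Hd2 H2]].
  set (m := Rmin d1 d2).
  assert (Hm : 0 < m) by (apply Rmin_pos; assumption).
  set (b := Rmax 0 (1 - m/2)).
  assert (Hb : 0 <= b < 1).
  { split; [apply Rmax_l|]. unfold b. apply Rmax_lub_lt; lra. }
  assert (Hbm : 1 - m < b) by (pose proof (Rmax_r 0 (1 - m/2)); unfold b; lra).
  assert (E1 := H1 b Hb ltac:(pose proof (Rmin_l d1 d2); unfold m in Hbm; lra)).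
  assert (E2 := H2 b Hb ltac:(pose proof (Rmin_r d1 d2); unfold m in Hbm; lra)).
  rewrite (RiemannInt_P5 (prg b Hb) (prf b Hb)) in E2.
  assert (Rabs (v - w) <= Rabs (RiemannInt (prf b Hb) - w) + Rabs (RiemannInt (prf b Hb) - v)).
  { replace (v - w) with ((RiemannInt (prf b Hb) - w) - (RiemannInt (prf b Hb) - v)) by ring.
    eapply Rle_trans; [apply Rabs_triang|]. rewrite Rabs_Ropp. lra. }
  lra.
Qed.

Lemma imp_scal (f : R -> R) (v l : R) :
  improper_int01 f v -> improper_int01 (fun x => l * f x) (l * v).
Proof.
  intros H. replace (l * v) with (v + (l - 1) * v) by ring.
  apply (imp_ext (fun x => f x + (l - 1) * f x)); [intros; ring|].
  apply imp_lin; assumption.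
Qed.

Lemma imp_val (f : R -> R) (v w : R) : improper_int01 f v -> v = w -> improper_int01 f w.
Proof. intros H E; subst; exact H. Qed.

Definition poly (a : nat -> R) (d : nat) (x : R) : R := sum_f_R0 (fun k => a k * x ^ k) d.

Lemma poly_lin a b l d x : poly (fun k => a k + l * b k) d x = poly a d x + l * poly b d x.
Proof. unfold poly; induction d; simpl; [ring|]. rewrite IHd. ring. Qed.

Lemma poly_top a d x : poly a (S d) x = poly a d x + a (S d) * x ^ (S d).
Proof. reflexivity. Qed.

Lemma Pe_poly c n x : Pe c n x = poly (c n) n x.
Proof. reflexivity. Qed.

Lemma top (c : nat -> nat -> R) (h : nat -> R) (W : R -> R)
  (Hmon : forall m, c m m = 1)
  (Horth : forall i j, improper_int01 (fun x => Pe c i x * Pe c j x * W x)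
                          (if Nat.eqb i j then h i else 0)) :
  forall d a m, (d <= m)%nat ->
  improper_int01 (fun x => poly a d x * Pe c m x * W x)
                 (if Nat.eqb d m then a d * h m else 0).
Proof.
  induction d as [|d IH]; intros a m Hdm.
  - assert (H := imp_scal _ _ (a 0%nat) (Horth 0%nat m)).
    eapply imp_ext; [|eapply imp_val; [exact H|]].
    + intros x _. unfold poly, Pe. simpl. rewrite Hmon. ring.
    + destruct m; simpl; ring.
  - set (e := fun k => a k + (- a (S d)) * c (S d) k).
    assert (H := imp_lin _ _ _ _ (a (S d)) (IH e m ltac:(lia)) (Horth (S d) m)).
    eapply imp_ext; [|eapply imp_val; [exact H|]].
    + intros x _. unfold e. rewrite poly_lin, poly_top. unfold Pe. simpl sum_f_R0.
      fold (poly (c (S d)) d x). rewrite Hmon. simpl. ring.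
    + replace (Nat.eqb d m) with false by (symmetry; apply Nat.eqb_neq; lia).
      destruct (Nat.eqb_spec (S d) m); [subst; ring|ring].
Qed.

Definition dpoly (a : nat -> R) (d : nat) (x : R) : R :=
  sum_f_R0 (fun k => a k * (INR k * x ^ pred k)) d.

Lemma poly_deriv a d x : derivable_pt_lim (poly a d) x (dpoly a d x).
Proof.
  induction d as [|d IH].
  - unfold poly, dpoly; simpl.
    replace (a 0%nat * (0 * 1)) with 0 by ring.
    apply (derivable_pt_lim_const (a 0%nat * 1)).
  - unfold dpoly; simpl sum_f_R0. fold (dpoly a d x).
    apply (derivable_pt_lim_plus (poly a d) (fun y => a (S d) * y ^ S d)); [exact IH|].
    apply (derivable_pt_lim_scal (fun y => y ^ S d)).
    apply derivable_pt_lim_pow.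
Qed.

Lemma x_dpoly a d x : x * dpoly a d x = poly (fun k => INR k * a k) d x.
Proof.
  unfold dpoly, poly; induction d as [|d IH]; simpl sum_f_R0.
  - simpl. ring.
  - rewrite Rmult_plus_distr_l, IH. simpl pred. simpl pow. ring.
Qed.

Lemma poly_cont a d x : continuity_pt (poly a d) x.
Proof. apply derivable_continuous_pt. exists (dpoly a d x). apply poly_deriv. Qed.

Lemma dpoly_cont a d x : continuity_pt (dpoly a d) x.
Proof.
  unfold dpoly; induction d as [|d IH]; simpl sum_f_R0.
  - apply derivable_continuous_pt. reg.
  - apply (continuity_pt_plus (fun y => sum_f_R0 (fun k => a k * (INR k * y ^ pred k)) d)
             (fun y => a (S d) * (INR (S d) * y ^ pred (S d)))); [exact IH|].
    apply derivable_continuous_pt. reg.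
Qed.

Lemma ftc (f F : R -> R) a b (pr : Riemann_integrable f a b) :
  a <= b -> (forall x, a <= x <= b -> continuity_pt f x) ->
  (forall x, a <= x <= b -> derivable_pt_lim F x (f x)) ->
  RiemannInt pr = F b - F a.
Proof.
  intros Hab Hc Hd.
  rewrite (RiemannInt_P20 Hab (FTC_P1 Hab Hc) pr).
  assert (H1 := RiemannInt_P29 Hab Hc).
  assert (H2 : antiderivative f F a b).
  { split; [|exact Hab]. intros x Hx. exists (exist _ (f x) (Hd x Hx)). reflexivity. }
  destruct (antiderivative_Ucte _ _ _ _ _ H1 H2) as [C HC].
  rewrite (HC b), (HC a); [ring|lra|lra].
Qed.

Lemma Rp_le1 x a : 0 < x <= 1 -> 0 < a -> 0 < Rpower x a <= 1.
Proof.
  intros Hx Ha. split; [unfold Rpower; apply exp_pos|].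
  replace 1 with (Rpower 1 a) by (unfold Rpower; rewrite ln_1, Rmult_0_r, exp_0; reflexivity).
  apply Rle_Rpower_l; lra.
Qed.

Lemma Rp_small a eta : 0 < a -> 0 < eta ->
  exists d, 0 < d /\ forall x, 0 < x < d -> Rpower x a < eta.
Proof.
  intros Ha He. exists (Rpower eta (/ a)). split; [unfold Rpower; apply exp_pos|].
  intros x Hx. replace eta with (Rpower (Rpower eta (/ a)) a) at 1.
  - apply Rlt_Rpower_l; lra.
  - rewrite Rpower_mult, Rinv_l by lra. apply Rpower_1; lra.
Qed.

Lemma Rp_split x a : 0 < x -> Rpower x a = Rpower x (a - 1) * x.
Proof.
  intros Hx. rewrite <- (Rpower_1 x) at 3 by exact Hx. rewrite <- Rpower_plus.
  f_equal; ring.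
Qed.

Lemma derivable_pt_lim_ext_val f x l l' : derivable_pt_lim f x l -> l = l' -> derivable_pt_lim f x l'.
Proof. intros H E; subst; exact H. Qed.

Definition Gk (alpha beta : R) (Q : R -> R) (K y : R) : R :=
  K * (y * Q y * Rpower y alpha * Rpower (1 - y) beta).

Definition gk (alpha beta : R) (Q Qd : R -> R) (K y : R) : R :=
  K * (((1 + alpha + beta) * Q y + y * Qd y) * (Rpower y alpha * Rpower (1 - y) beta)
       - beta * (Q y / (1 - y) * (Rpower y alpha * Rpower (1 - y) beta))).

Lemma Gk_deriv alpha beta Q Qd K y :
  (forall x, derivable_pt_lim Q x (Qd x)) -> 0 < y < 1 ->
  derivable_pt_lim (Gk alpha beta Q K) y (gk alpha beta Q Qd K y).
Proof.
  intros HQ Hy.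
  assert (H1 : derivable_pt_lim (fun z => Rpower z alpha) y (alpha * Rpower y (alpha - 1)))
    by (apply derivable_pt_lim_power; lra).
  assert (H2 : derivable_pt_lim (fun z => Rpower (1 - z) beta) y
                 (beta * Rpower (1 - y) (beta - 1) * (0 - 1))).
  { apply (derivable_pt_lim_comp (fun z => 1 - z) (fun z => Rpower z beta)).
    - apply (derivable_pt_lim_minus (fct_cte 1) id); [apply derivable_pt_lim_const|apply derivable_pt_lim_id].
    - apply derivable_pt_lim_power; lra. }
  assert (H3 : derivable_pt_lim (fun z => z * Q z) y (1 * Q y + y * Qd y)).
  { apply (derivable_pt_lim_mult id Q); [apply derivable_pt_lim_id|apply HQ]. }
  assert (H4 := derivable_pt_lim_mult _ _ _ _ _ H3 H1).
  assert (H5 := derivable_pt_lim_mult _ _ _ _ _ H4 H2).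
  assert (H6 := derivable_pt_lim_scal _ K _ _ H5).
  unfold Gk. eapply (derivable_pt_lim_ext_val); [exact H6|].
  unfold gk, mult_fct, id.
  rewrite (Rp_split y alpha), (Rp_split (1 - y) beta) by lra.
  field. lra.
Qed.

Lemma gk_cont alpha beta Q Qd K y :
  (forall x, continuity_pt Q x) -> (forall x, continuity_pt Qd x) -> 0 < y < 1 ->
  continuity_pt (gk alpha beta Q Qd K) y.
Proof.
  intros HQ HQd Hy.
  assert (C1 : continuity_pt (fun z => Rpower z alpha) y).
  { apply derivable_continuous_pt. exists (alpha * Rpower y (alpha - 1)).
    apply derivable_pt_lim_power; lra. }
  assert (C2 : continuity_pt (fun z => Rpower (1 - z) beta) y).
  { apply (continuity_pt_comp (fun z => 1 - z) (fun z => Rpower z beta)).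
    - apply derivable_continuous_pt. reg.
    - apply derivable_continuous_pt. exists (beta * Rpower (1 - y) (beta - 1)).
      apply derivable_pt_lim_power; lra. }
  assert (C3 : continuity_pt (fun z => Rpower z alpha * Rpower (1 - z) beta) y)
    by (apply (continuity_pt_mult (fun z => Rpower z alpha) (fun z => Rpower (1 - z) beta)); assumption).
  assert (Cid : continuity_pt (fun z => z) y) by (apply derivable_continuous_pt; reg).
  assert (Cc : forall k, continuity_pt (fun _ => k) y) by (intros; apply derivable_continuous_pt; reg).
  assert (C4 : continuity_pt (fun z => (1 + alpha + beta) * Q z + z * Qd z) y).
  { apply (continuity_pt_plus (fun z => (1 + alpha + beta) * Q z) (fun z => z * Qd z)).
    - apply (continuity_pt_mult (fun _ => 1 + alpha + beta) Q); auto.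
    - apply (continuity_pt_mult (fun z => z) Qd); auto. }
  assert (C5 : continuity_pt (fun z => Q z / (1 - z)) y).
  { apply (continuity_pt_div Q (fun z => 1 - z)); auto.
    - apply derivable_continuous_pt; reg.
    - lra. }
  unfold gk.
  apply (continuity_pt_mult (fun _ => K)); [auto|].
  apply (continuity_pt_minus (fun z => ((1 + alpha + beta) * Q z + z * Qd z) * (Rpower z alpha * Rpower (1 - z) beta))
           (fun z => beta * (Q z / (1 - z) * (Rpower z alpha * Rpower (1 - z) beta)))).
  - apply (continuity_pt_mult (fun z => (1 + alpha + beta) * Q z + z * Qd z)); auto.
  - apply (continuity_pt_mult (fun _ => beta)); [auto|].
    apply (continuity_pt_mult (fun z => Q z / (1 - z))); auto.
Qed.

Lemma gk_int alpha beta Q Qd K a b (pr : Riemann_integrable (gk alpha beta Q Qd K) a b) :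
  (forall x, derivable_pt_lim Q x (Qd x)) ->
  (forall x, continuity_pt Q x) -> (forall x, continuity_pt Qd x) ->
  0 < a <= b -> b < 1 ->
  RiemannInt pr = Gk alpha beta Q K b - Gk alpha beta Q K a.
Proof.
  intros HD HQ HQd Hab Hb. apply ftc; [lra| |].
  - intros x Hx. apply gk_cont; auto; lra.
  - intros x Hx. apply Gk_deriv; auto; lra.
Qed.

Definition gI alpha beta A B t (Q Qd : R -> R) (x : R) : R :=
  ((1 + alpha + beta) * Q x + x * Qd x) * weight alpha beta A B t x
  - beta * (Q x / (1 - x) * weight alpha beta A B t x).

Lemma rpow_pos x a : 0 < x -> rpow x a = Rpower x a.
Proof. intros H. unfold rpow. destruct (Rlt_dec 0 x); [reflexivity|lra]. Qed.

Lemma weight_low alpha beta A B t x : 0 < x < t -> t < 1 ->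
  weight alpha beta A B t x = Rpower x alpha * Rpower (1 - x) beta * A.
Proof.
  intros Hx Ht. unfold weight, theta. rewrite !rpow_pos by lra.
  destruct (Rle_dec 0 (x - t)); [lra|ring].
Qed.

Lemma weight_high alpha beta A B t x : t <= x < 1 -> 0 < t ->
  weight alpha beta A B t x = Rpower x alpha * Rpower (1 - x) beta * (A + B).
Proof.
  intros Hx Ht. unfold weight, theta. rewrite !rpow_pos by lra.
  destruct (Rle_dec 0 (x - t)); [ring|lra].
Qed.

Lemma gI_low alpha beta A B t Q Qd x : 0 < x < t -> t < 1 ->
  gI alpha beta A B t Q Qd x = gk alpha beta Q Qd A x.
Proof. intros. unfold gI, gk. rewrite weight_low by assumption. ring. Qed.

Lemma gI_high alpha beta A B t Q Qd x : t <= x < 1 -> 0 < t ->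
  gI alpha beta A B t Q Qd x = gk alpha beta Q Qd (A + B) x.
Proof. intros. unfold gI, gk. rewrite weight_high by assumption. ring. Qed.

Lemma abs_mul_le a b Ma Mb : Rabs a <= Ma -> Rabs b <= Mb -> Rabs (a * b) <= Ma * Mb.
Proof.
  intros Ha Hb. rewrite Rabs_mult. apply Rmult_le_compat; auto using Rabs_pos.
Qed.

Lemma abs_add_le a b Ma Mb : Rabs a <= Ma -> Rabs b <= Mb -> Rabs (a + b) <= Ma + Mb.
Proof. intros. eapply Rle_trans; [apply Rabs_triang|lra]. Qed.

Lemma abs_sub_le a b Ma Mb : Rabs a <= Ma -> Rabs b <= Mb -> Rabs (a - b) <= Ma + Mb.
Proof. intros. eapply Rle_trans; [apply Rabs_triang|]. rewrite Rabs_Ropp. lra. Qed.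

Lemma gk_bound alpha beta Q Qd K t MQ MQd x :
  0 < alpha -> 0 < beta -> 0 <= K -> 0 < x < t -> t < 1 ->
  Rabs (Q x) <= MQ -> Rabs (Qd x) <= MQd ->
  Rabs (gk alpha beta Q Qd K x) <= K * (((1 + alpha + beta) * MQ + 1 * MQd) * 1 + beta * (MQ * / (1 - t) * 1)).
Proof.
  intros Ha Hb HK Hx Ht HQ HQd.
  assert (HR : Rabs (Rpower x alpha * Rpower (1 - x) beta) <= 1).
  { destruct (Rp_le1 x alpha) as [P1 P2]; [lra|lra|].
    destruct (Rp_le1 (1 - x) beta) as [P3 P4]; [lra|lra|].
    rewrite Rabs_right by nra. nra. }
  unfold gk. apply abs_mul_le; [rewrite Rabs_right; lra|].
  apply abs_sub_le.
  - apply abs_mul_le; [|exact HR].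
    apply abs_add_le.
    + apply abs_mul_le; [rewrite Rabs_right; lra|exact HQ].
    + apply abs_mul_le; [rewrite Rabs_right; lra|exact HQd].
  - apply abs_mul_le; [rewrite Rabs_right; lra|].
    apply abs_mul_le; [|exact HR]. unfold Rdiv. apply abs_mul_le; [exact HQ|].
    rewrite Rabs_right.
    + apply Rinv_le_contravar; lra.
    + left; apply Rinv_0_lt_compat; lra.
Qed.

Lemma small_zero D C : (forall eps, 0 < eps < C -> Rabs D <= 0) -> True.
Proof. auto. Qed.

Lemma lin_bound_zero D C T : 0 < T ->
  (forall eps, 0 < eps < T -> Rabs D <= C * eps) -> D = 0.
Proof.
  intros HT H.
  assert (HC : 0 <= C).
  { assert (H1 := H (T/2) ltac:(lra)). pose proof (Rabs_pos D).
    destruct (Rle_dec 0 C); [assumption|]. nra. }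
  destruct (Req_dec D 0) as [|Hne]; [assumption|exfalso].
  assert (HD : 0 < Rabs D) by (apply Rabs_pos_lt; exact Hne).
  set (e2 := Rabs D / (2 * (C + 1))).
  assert (He2 : 0 < e2) by (unfold e2; apply Rdiv_lt_0_compat; lra).
  assert (HDe : Rabs D = 2 * (C + 1) * e2) by (unfold e2; field; lra).
  set (eps := Rmin (T/2) e2).
  assert (Heps : 0 < eps) by (apply Rmin_pos; lra).
  assert (H1 := H eps ltac:(split; [exact Heps|]; pose proof (Rmin_l (T/2) e2); unfold eps; lra)).
  assert (eps <= e2) by apply Rmin_r.
  nra.
Qed.

Lemma abs_between y M : Rabs y <= M -> -M <= y <= M.
Proof. intros H. pose proof (Rle_abs y). pose proof (Rle_abs (-y)). rewrite Rabs_Ropp in *. lra. Qed.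

Lemma gI_exact alpha beta A B t Q Qd MQ MQd b
  (pr : Riemann_integrable (gI alpha beta A B t Q Qd) 0 b) :
  0 < alpha -> 0 < beta -> 0 <= A -> 0 < t < 1 ->
  (forall x, derivable_pt_lim Q x (Qd x)) ->
  (forall x, continuity_pt Q x) -> (forall x, continuity_pt Qd x) ->
  (forall x, 0 <= x <= 1 -> Rabs (Q x) <= MQ) ->
  (forall x, 0 <= x <= 1 -> Rabs (Qd x) <= MQd) ->
  t < b < 1 ->
  RiemannInt pr = Gk alpha beta Q (A + B) b
                  - B * (t * Q t * Rpower t alpha * Rpower (1 - t) beta).
Proof.
  intros Ha Hb HA Ht HD HQc HQdc HMQ HMQd Hbb.
  apply Rminus_diag_uniq.
  set (M1 := A * (((1 + alpha + beta) * MQ + 1 * MQd) * 1 + beta * (MQ * / (1 - t) * 1))).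
  apply (lin_bound_zero _ (M1 + A * MQ) t); [lra|].
  intros eps Heps.
  assert (pr0 : Riemann_integrable (gI alpha beta A B t Q Qd) 0 eps)
    by (apply (RiemannInt_P22 pr); lra).
  assert (pr1 : Riemann_integrable (gI alpha beta A B t Q Qd) eps b)
    by (apply (RiemannInt_P23 pr); lra).
  assert (pr2 : Riemann_integrable (gI alpha beta A B t Q Qd) eps t)
    by (apply (RiemannInt_P22 pr1); lra).
  assert (pr3 : Riemann_integrable (gI alpha beta A B t Q Qd) t b)
    by (apply (RiemannInt_P23 pr1); lra).
  assert (E1 := RiemannInt_P26 pr0 pr1 pr).
  assert (E2 := RiemannInt_P26 pr2 pr3 pr1).
  assert (prA : Riemann_integrable (gk alpha beta Q Qd A) eps t).
  { apply continuity_implies_RiemannInt; [lra|]. intros x Hx; apply gk_cont; auto; lra. }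
  assert (prB : Riemann_integrable (gk alpha beta Q Qd (A + B)) t b).
  { apply continuity_implies_RiemannInt; [lra|]. intros x Hx; apply gk_cont; auto; lra. }
  assert (E3 : RiemannInt pr2 = RiemannInt prA).
  { apply RiemannInt_P18; [lra|]. intros x Hx. apply gI_low; lra. }
  assert (E4 : RiemannInt pr3 = RiemannInt prB).
  { apply RiemannInt_P18; [lra|]. intros x Hx. apply gI_high; lra. }
  rewrite (gk_int _ _ _ _ _ _ _ prA) in E3 by (auto; lra).
  rewrite (gk_int _ _ _ _ _ _ _ prB) in E4 by (auto; lra).
  assert (B0 : Rabs (RiemannInt pr0) <= M1 * eps).
  { assert (Hb0 := @RiemannInt_const_bound _ 0 eps (- M1) M1 pr0 ltac:(lra)).
    destruct Hb0 as [L U].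
    - intros x Hx. apply abs_between. rewrite gI_low by lra.
      apply gk_bound; auto; try lra; [apply HMQ|apply HMQd]; lra.
    - apply Rabs_le. lra. }
  assert (B1 : Rabs (Gk alpha beta Q A eps) <= A * (eps * MQ * 1 * 1)).
  { unfold Gk. apply abs_mul_le; [rewrite Rabs_right; lra|].
    destruct (Rp_le1 eps alpha) as [P1 P2]; [lra|lra|].
    destruct (Rp_le1 (1 - eps) beta) as [P3 P4]; [lra|lra|].
    apply abs_mul_le; [apply abs_mul_le; [apply abs_mul_le|]|].
    - rewrite Rabs_right; lra.
    - apply HMQ; lra.
    - rewrite Rabs_right; lra.
    - rewrite Rabs_right; lra. }
  replace (RiemannInt pr - (Gk alpha beta Q (A + B) b - B * (t * Q t * Rpower t alpha * Rpower (1 - t) beta)))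
    with (RiemannInt pr0 - Gk alpha beta Q A eps).
  2:{ unfold Gk in *. lra. }
  eapply Rle_trans; [apply (abs_sub_le _ _ _ _ B0 B1)|]. lra.
Qed.

Lemma bound01 (f : R -> R) : (forall x, continuity_pt f x) ->
  exists M, forall x, 0 <= x <= 1 -> Rabs (f x) <= M.
Proof.
  intros Hc.
  destruct (continuity_ab_maj (fun x => Rabs (f x)) 0 1) as [Mx [HM _]]; [lra| |].
  - intros c0 _. apply (continuity_pt_comp f Rabs); [apply Hc|apply Rcontinuity_abs].
  - exists (Rabs (f Mx)). exact HM.
Qed.

Lemma core alpha beta A B t Q Qd v :
  0 < alpha -> 0 < beta -> 0 <= A -> 0 <= A + B -> 0 < t < 1 ->
  (forall x, derivable_pt_lim Q x (Qd x)) ->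
  (forall x, continuity_pt Q x) -> (forall x, continuity_pt Qd x) ->
  improper_int01 (gI alpha beta A B t Q Qd) v ->
  v = - (B * (t * Q t * Rpower t alpha * Rpower (1 - t) beta)).
Proof.
  intros Ha Hb HA HAB Ht HD HQc HQdc [pr Hv].
  destruct (bound01 Q HQc) as [MQ HMQ].
  destruct (bound01 Qd HQdc) as [MQd HMQd].
  assert (HMQ0 : 0 <= MQ) by (pose proof (HMQ 0 ltac:(lra)); pose proof (Rabs_pos (Q 0)); lra).
  set (J := B * (t * Q t * Rpower t alpha * Rpower (1 - t) beta)).
  destruct (Req_dec v (- J)) as [|Hne]; [assumption|exfalso].
  set (eps := Rabs (v + J) / 2).
  assert (Heps : 0 < eps) by (unfold eps; apply Rdiv_lt_0_compat; [apply Rabs_pos_lt; lra|lra]).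
  destruct (Hv eps Heps) as [d [Hd H1]].
  set (K := (A + B) * MQ).
  assert (HK : 0 <= K) by (unfold K; apply Rmult_le_pos; lra).
  destruct (Rp_small beta (eps / (K + 1)) Hb) as [dl [Hdl H2]].
  { apply Rdiv_lt_0_compat; lra. }
  set (m := Rmin d dl).
  assert (Hm : 0 < m) by (apply Rmin_pos; lra).
  assert (Hmd : m <= d) by apply Rmin_l.
  assert (Hmdl : m <= dl) by apply Rmin_r.
  set (b := Rmax ((1 + t) / 2) (1 - m / 2)).
  assert (Hb1 : (1 + t)/2 <= b) by apply Rmax_l.
  assert (Hb2 : 1 - m/2 <= b) by apply Rmax_r.
  assert (Hb3 : b < 1) by (unfold b; apply Rmax_lub_lt; lra).
  assert (Hbb : 0 <= b < 1) by lra.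
  assert (E1 := H1 b Hbb ltac:(lra)).
  rewrite (gI_exact _ _ _ _ _ _ _ MQ MQd b (pr b Hbb)) in E1 by (auto; lra).
  fold J in E1.
  assert (E2 : Rabs (Gk alpha beta Q (A + B) b) <= K * Rpower (1 - b) beta).
  { unfold Gk, K. replace ((A + B) * MQ * Rpower (1 - b) beta) with ((A + B) * (MQ * Rpower (1 - b) beta)) by ring.
    apply abs_mul_le; [rewrite Rabs_right; lra|].
    destruct (Rp_le1 b alpha) as [P1 P2]; [lra|lra|].
    destruct (Rp_le1 (1 - b) beta) as [P3 P4]; [lra|lra|].
    replace (MQ * Rpower (1 - b) beta) with ((1 * MQ * 1) * Rpower (1 - b) beta) by ring.
    apply abs_mul_le; [apply abs_mul_le; [apply abs_mul_le|]|].
    - rewrite Rabs_right; lra.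
    - apply HMQ; lra.
    - rewrite Rabs_right; lra.
    - rewrite Rabs_right; lra. }
  assert (E3 : Rpower (1 - b) beta < eps / (K + 1)).
  { apply H2. lra. }
  assert (E4 : K * Rpower (1 - b) beta < eps).
  { destruct (Rp_le1 (1 - b) beta) as [P3 P4]; [lra|lra|].
    assert (K * Rpower (1 - b) beta <= K * (eps / (K + 1))) by (apply Rmult_le_compat_l; lra).
    assert (K * (eps / (K + 1)) < eps).
    { apply (Rmult_lt_reg_r (K + 1)); [lra|].
      replace (K * (eps / (K + 1)) * (K + 1)) with (K * eps) by (field; lra). nra. }
    lra. }
  assert (Rabs (v + J) <= Rabs (Gk alpha beta Q (A + B) b - J - v) + Rabs (Gk alpha beta Q (A + B) b)).
  { replace (v + J) with (- (Gk alpha beta Q (A + B) b - J - v) + Gk alpha beta Q (A + B) b) by ring.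
    eapply Rle_trans; [apply Rabs_triang|]. rewrite Rabs_Ropp. lra. }
  unfold eps in *. lra.
Qed.

Lemma shift_poly a d x :
  x * poly a d x = poly (fun k => match k with O => 0 | S j => a j end) (S d) x.
Proof.
  induction d as [|d IH].
  - unfold poly; simpl. ring.
  - rewrite (poly_top a d x), Rmult_plus_distr_l, IH, (poly_top _ (S d) x). simpl pow. ring.
Qed.

Lemma orth0 (c : nat -> nat -> R) h W i j :
  (forall i j, improper_int01 (fun x => Pe c i x * Pe c j x * W x) (if Nat.eqb i j then h i else 0)) ->
  i <> j -> improper_int01 (fun x => Pe c i x * Pe c j x * W x) 0.
Proof.
  intros H Hij. eapply imp_val; [apply H|]. apply Nat.eqb_neq in Hij. rewrite Hij. reflexivity.
Qed.

Lemma orthd (c : nat -> nat -> R) h W i :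
  (forall i j, improper_int01 (fun x => Pe c i x * Pe c j x * W x) (if Nat.eqb i j then h i else 0)) ->
  improper_int01 (fun x => Pe c i x * Pe c i x * W x) (h i).
Proof.
  intros H. eapply imp_val; [apply H|]. rewrite Nat.eqb_refl. reflexivity.
Qed.

Lemma Yform alpha beta A B t (c : nat -> nat -> R) (h Y : nat -> R) m :
  0 < alpha -> 0 < beta -> 0 <= A -> 0 <= A + B -> 0 < t < 1 ->
  (forall m, c m m = 1) ->
  (forall i j, improper_int01 (fun x => Pe c i x * Pe c j x * weight alpha beta A B t x)
                 (if Nat.eqb i j then h i else 0)) ->
  improper_int01 (fun y => Pe c (S m) y * Pe c m y / (1 - y) * weight alpha beta A B t y) (Y (S m)) ->
  beta * Y (S m) = - (c (S m) m) * h m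
     + B * (t * (Pe c (S m) t * Pe c m t) * Rpower t alpha * Rpower (1 - t) beta).
Proof.
  intros Ha Hb HA HAB Ht Hmon Horth HY.
  set (W := weight alpha beta A B t).
  set (Q := fun x => Pe c (S m) x * Pe c m x).
  set (Qd := fun x => dpoly (c (S m)) (S m) x * Pe c m x + Pe c (S m) x * dpoly (c m) m x).
  assert (HD : forall x, derivable_pt_lim Q x (Qd x)).
  { intros x. apply (derivable_pt_lim_mult (Pe c (S m)) (Pe c m));
    [exact (poly_deriv (c (S m)) (S m) x)|exact (poly_deriv (c m) m x)]. }
  assert (HQc : forall x, continuity_pt Q x).
  { intros x. apply (continuity_pt_mult (Pe c (S m)) (Pe c m));
    [exact (poly_cont (c (S m)) (S m) x)|exact (poly_cont (c m) m x)]. }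
  assert (HQdc : forall x, continuity_pt Qd x).
  { intros x. unfold Qd.
    apply (continuity_pt_plus (fun x => dpoly (c (S m)) (S m) x * Pe c m x)
             (fun x => Pe c (S m) x * dpoly (c m) m x)).
    - apply (continuity_pt_mult (dpoly (c (S m)) (S m)) (Pe c m)); [apply dpoly_cont|exact (poly_cont (c m) m x)].
    - apply (continuity_pt_mult (Pe c (S m)) (dpoly (c m) m)); [exact (poly_cont (c (S m)) (S m) x)|apply dpoly_cont]. }
  set (a2 := fun k => INR k * c (S m) k + (- INR (S m)) * c (S m) k).
  set (a3 := fun k => INR k * c m k).
  assert (I2 := top c h W Hmon Horth m a2 m ltac:(lia)).
  rewrite Nat.eqb_refl in I2.
  assert (I3 := top c h W Hmon Horth m a3 (S m) ltac:(lia)).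
  replace (Nat.eqb m (S m)) with false in I3 by (symmetry; apply Nat.eqb_neq; lia).
  assert (I1 := orth0 c h W (S m) m Horth ltac:(lia)).
  set (l := 1 + alpha + beta + INR (S m)).
  assert (S1 := imp_lin _ _ _ _ l I2 I1).
  assert (S2 := imp_lin _ _ _ _ 1 S1 I3).
  assert (S3 := imp_lin _ _ _ _ (- beta) S2 HY).
  assert (S4 : improper_int01 (gI alpha beta A B t Q Qd)
       (a2 m * h m + l * 0 + 1 * 0 + - beta * Y (S m))).
  { eapply imp_ext; [|exact S3]. intros x _.
    assert (K1 : x * dpoly (c (S m)) (S m) x = INR (S m) * Pe c (S m) x + poly a2 m x).
    { rewrite x_dpoly, poly_top. unfold a2. rewrite poly_lin, Pe_poly, poly_top, Hmon. ring. }
    assert (K2 : x * dpoly (c m) m x = poly a3 m x) by (unfold a3; apply x_dpoly).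
    unfold gI. fold W. unfold Q, Qd.
    replace (x * (dpoly (c (S m)) (S m) x * Pe c m x + Pe c (S m) x * dpoly (c m) m x))
      with ((x * dpoly (c (S m)) (S m) x) * Pe c m x + Pe c (S m) x * (x * dpoly (c m) m x)) by ring.
    rewrite K1, K2. unfold l. ring. }
  assert (E := core _ _ _ _ _ _ _ _ Ha Hb HA HAB Ht HD HQc HQdc S4).
  unfold a2 in E. rewrite S_INR in E. unfold Q in E. lra.
Qed.

Lemma alpha_form (c : nat -> nat -> R) (h an bn : nat -> R) W n :
  (forall m, c m m = 1) ->
  (forall i j, improper_int01 (fun x => Pe c i x * Pe c j x * W x) (if Nat.eqb i j then h i else 0)) ->
  (forall i, 0 < h i) ->
  (forall (m : nat) (x : R), x * Pe c m x = Pe c (S m) x + an m * Pe c m x + bn m * Pprev c m x) ->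
  an (S n) = c (S n) n - c (S (S n)) (S n).
Proof.
  intros Hmon Horth Hh Hrec.
  set (N := S n).
  set (e := fun k => (match k with O => 0 | S j => c N j end) + (-1) * c (S N) k).
  assert (I1 := top c h W Hmon Horth N e N ltac:(lia)). rewrite Nat.eqb_refl in I1.
  assert (I2 := imp_lin _ _ _ _ (bn N) (imp_scal _ _ (an N) (orthd c h W N Horth))
                  (orth0 c h W n N Horth ltac:(lia))).
  assert (I3 : improper_int01 (fun x => poly e N x * Pe c N x * W x) (an N * h N + bn N * 0)).
  { eapply imp_ext; [|exact I2]. intros x _.
    assert (K : poly e N x = x * Pe c N x - Pe c (S N) x).
    { assert (K0 : poly e (S N) x = poly e N x).
      { rewrite poly_top. replace (e (S N)) with 0 by (unfold e; rewrite !Hmon; ring). ring. }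
      rewrite <- K0. unfold e. rewrite poly_lin, Pe_poly, shift_poly, Pe_poly. ring. }
    rewrite K, (Hrec N x). replace (Pprev c N x) with (Pe c n x) by reflexivity. ring. }
  assert (U := imp_uniq _ _ _ I1 I3).
  unfold e in U. simpl in U. specialize (Hh N).
  apply (Rmult_eq_reg_r (h N)); [|lra]. fold N. lra.
Qed.

Lemma Xrel (c : nat -> nat -> R) (h an bn X Y : nat -> R) W n :
  (forall i j, improper_int01 (fun x => Pe c i x * Pe c j x * W x) (if Nat.eqb i j then h i else 0)) ->
  (forall i, 0 < h i) ->
  (forall (m : nat) (x : R), x * Pe c m x = Pe c (S m) x + an m * Pe c m x + bn m * Pprev c m x) ->
  bn (S n) = h (S n) / h n ->
  (forall m, improper_int01 (fun y => Pe c m y ^ 2 / (1 - y) * W y) (X m)) ->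
  improper_int01 (fun y => Pe c (S n) y * Pe c n y / (1 - y) * W y) (Y (S n)) ->
  improper_int01 (fun y => Pe c (S (S n)) y * Pe c (S n) y / (1 - y) * W y) (Y (S (S n))) ->
  (1 - an (S n)) * (Y (S n) / h n - Y (S (S n)) / h (S n))
  = bn (S n) * X n / h n - X (S (S n)) / h (S n).
Proof.
  intros Horth Hh Hrec Hbn HX HY1 HY2.
  set (N := S n).
  assert (L := imp_lin _ _ _ _ (- (1 - an N) / h N) (imp_scal _ _ ((1 - an N) / h n) HY1) HY2).
  assert (R1 := imp_lin _ _ _ _ (-1 / h N) (imp_scal _ _ (bn N / h n) (HX n)) (HX (S N))).
  assert (R2 := imp_lin _ _ _ _ (1 / h n) R1 (orth0 c h W N n Horth ltac:(unfold N; lia))).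
  assert (R3 := imp_lin _ _ _ _ (-1 / h N) R2 (orth0 c h W N (S N) Horth ltac:(lia))).
  assert (R4 : improper_int01
     (fun y => (1 - an N) / h n * (Pe c N y * Pe c n y / (1 - y) * W y) +
               - (1 - an N) / h N * (Pe c (S N) y * Pe c N y / (1 - y) * W y))
     (bn N / h n * X n + -1 / h N * X (S N) + 1 / h n * 0 + -1 / h N * 0)).
  { eapply imp_ext; [|exact R3]. intros x Hx. cbv beta.
    assert (Hr := Hrec N x). replace (Pprev c N x) with (Pe c n x) in Hr by reflexivity.
    replace (Pe c (S N) x) with (x * Pe c N x - an N * Pe c N x - bn N * Pe c n x) by lra.
    replace (bn N) with (h N / h n) by (symmetry; exact Hbn). pose proof (Hh n). pose proof (Hh N).
    field. repeat split; lra. }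
  assert (U := imp_uniq _ _ _ L R4).
  pose proof (Hh n). pose proof (Hh N). fold N.
  replace ((1 - an N) * (Y N / h n - Y (S N) / h N))
    with ((1 - an N) / h n * Y N + - (1 - an N) / h N * Y (S N)) by (field; lra).
  unfold N in *. rewrite U. field. lra.
Qed.

Theorem mainTheorem6
  (alpha beta A B t : R)
  (c : nat -> nat -> R)          (* coefficients of P_n(x; t) *)
  (h an bn : nat -> R)           (* h_n, alpha_n, beta_n *)
  (X Y : nat -> R)               (* the integrals defining x_n, y_n *)
  (n : nat) :
  0 < alpha -> 0 < beta ->
  0 <= A -> 0 <= A + B -> ~ (A = 0 /\ A + B = 0) ->
  0 < t < 1 ->
  (* P_m is monic of degree m *)
  (forall m : nat, c m m = 1) ->
  (* orthogonality: int_0^1 P_i P_j w = h_i delta_ij, h_i > 0 *)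
  (forall i j : nat,
     improper_int01 (fun x => Pe c i x * Pe c j x * weight alpha beta A B t x)
       (if Nat.eqb i j then h i else 0)) ->
  (forall i : nat, 0 < h i) ->
  (* three-term recurrence x P_m = P_{m+1} + alpha_m P_m + beta_m P_{m-1}, P_{-1} = 0 *)
  (forall (m : nat) (x : R),
     x * Pe c m x = Pe c (S m) x + an m * Pe c m x + bn m * Pprev c m x) ->
  (* beta_m = h_m / h_{m-1} *)
  (forall m : nat, (1 <= m)%nat -> bn m = h m / h (m - 1)%nat) ->
  (* X_m = int_0^1 P_m(y)^2/(1-y) w(y) dy *)
  (forall m : nat,
     improper_int01 (fun y => Pe c m y ^ 2 / (1 - y) * weight alpha beta A B t y) (X m)) ->
  (* Y_m = int_0^1 P_m(y) P_{m-1}(y)/(1-y) w(y) dy, m >= 1 *)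
  (forall m : nat, (1 <= m)%nat ->
     improper_int01 (fun y => Pe c m y * Pe c (m - 1) y / (1 - y) * weight alpha beta A B t y) (Y m)) ->
  (1 <= n)%nat ->
  let Rs := Rn c h alpha beta B t in
  let rs := rn c h alpha beta B t in
  let xs := xn beta h X in
  let ys := yn beta h Y in
  (t - an n) * (rs (S n) - rs n) = bn (S n) * Rs (S n) - bn n * Rs (n - 1)%nat /\
  (1 - an n) * (ys n - ys (S n)) = bn n * xs (n - 1)%nat - bn (S n) * xs (S n) /\
  - an n * (ys (S n) - ys n + rs n - rs (S n) - 1)
    = bn (S n) * xs (S n) - bn n * xs (n - 1)%nat + bn n * Rs (n - 1)%nat - bn (S n) * Rs (S n).
Proof.
  intros Ha Hb HA HAB HAB0 Ht Hmon Horth Hh Hrec Hbn HX HY Hn.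
  cbv zeta.
  destruct n as [|n']; [lia|].
  set (N := S n').
  assert (Hbn1 : bn N = h N / h n').
  { rewrite (Hbn N ltac:(unfold N; lia)). replace (N - 1)%nat with n' by (unfold N; lia). reflexivity. }
  assert (Hbn2 : bn (S N) = h (S N) / h N).
  { rewrite (Hbn (S N) ltac:(lia)). replace (S N - 1)%nat with N by lia. reflexivity. }
  assert (HY1 := HY N ltac:(unfold N; lia)). replace (N - 1)%nat with n' in HY1 by (unfold N; lia).
  assert (HY2 := HY (S N) ltac:(lia)). replace (S N - 1)%nat with N in HY2 by lia.
  assert (YF1 := Yform alpha beta A B t c h Y n' Ha Hb HA HAB Ht Hmon Horth HY1).
  assert (YF2 := Yform alpha beta A B t c h Y N Ha Hb HA HAB Ht Hmon Horth HY2).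
  assert (AF := alpha_form c h an bn _ n' Hmon Horth Hh Hrec).
  assert (XR := Xrel c h an bn X Y _ n' Horth Hh Hrec Hbn1 HX HY1 HY2).
  assert (Hr := Hrec N t). replace (Pprev c N t) with (Pe c n' t) in Hr by reflexivity.
  fold N in YF1, AF, XR. 
  pose proof (Hh n'). pose proof (Hh N). pose proof (Hh (S N)).
  replace (N - 1)%nat with n' by (unfold N; lia).
  unfold Rn, rn, xn, yn. fold N.
  rewrite !rpow_pos by lra.
  set (Ra := Rpower t alpha) in *. set (Rb := Rpower (1 - t) beta) in *.
  set (p0 := Pe c n' t) in *. set (p1 := Pe c N t) in *. set (p2 := Pe c (S N) t) in *.
  assert (G1 : (t - an N) * (B * Ra * Rb * p2 * p1 / h N - B * Ra * Rb * p1 * p0 / h n') =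
     bn (S N) * (B * Ra * Rb * p2 ^ 2 / h (S N)) - bn N * (B * Ra * Rb * p0 ^ 2 / h n')).
  { replace p2 with (t * p1 - an N * p1 - bn N * p0) by lra.
    rewrite Hbn2, Hbn1. field. repeat split; lra. }
  assert (G2 : (1 - an N) * (beta / h n' * Y N - beta / h N * Y (S N)) =
     bn N * (beta / h n' * X n') - bn (S N) * (beta / h (S N) * X (S N))).
  { replace ((1 - an N) * (beta / h n' * Y N - beta / h N * Y (S N)))
      with (beta * ((1 - an N) * (Y N / h n' - Y (S N) / h N))) by (field; lra).
    rewrite XR, Hbn2. field. repeat split; lra. }
  assert (G3 : beta / h N * Y (S N) - beta / h n' * Y N
               - t * (B * Ra * Rb * p2 * p1 / h N - B * Ra * Rb * p1 * p0 / h n') = an N).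
  { replace (beta / h N * Y (S N)) with (beta * Y (S N) / h N) by (field; lra).
    replace (beta / h n' * Y N) with (beta * Y N / h n') by (field; lra).
    rewrite YF1, YF2, AF. field. lra. }
  split; [exact G1|]. split; [exact G2|].
  set (y0 := beta / h n' * Y N) in *. set (y1 := beta / h N * Y (S N)) in *.
  set (r0 := B * Ra * Rb * p1 * p0 / h n') in *. set (r1 := B * Ra * Rb * p2 * p1 / h N) in *.
  set (x0 := bn N * (beta / h n' * X n')) in *.
  set (x1 := bn (S N) * (beta / h (S N) * X (S N))) in *.
  set (R0 := bn N * (B * Ra * Rb * p0 ^ 2 / h n')) in *.
  set (R1 := bn (S N) * (B * Ra * Rb * p2 ^ 2 / h (S N))) in *.
  set (a := an N) in *.
  replace (bn (S N) * (beta / h (S N) * X (S N))) with x1 by reflexivity.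
  change (match N with 0%nat => 0 | S m => beta / h m * Y N end) with y0.
  change (match N with 0%nat => 0 | S m => B * Ra * Rb * p1 * Pe c m t / h m end) with r0.
  lra.
Qed.
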